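(* Consider the multiset combinatorial auction model described in the context and an iterative auction that first asks demand queries and then value queries, with truthful bidders, whose allocation after any set of reports is a solution of the winner determination problem (WDP) on the inferred values. Let $a^{DQ}$ be the WDP allocation computed from the reports after the last demand query. Suppose the first value-query round is the bridge bid, i.e., each bidder $i$ is asked a value query for the bundle $a^{DQ}_i$. Then, after the bridge bid and after any subsequent value queries, the efficiency of the WDP allocation is at least the efficiency of $a^{DQ}$, the efficiency achieved by the demand queries alone.
   Context: Multiset combinatorial auction: bidders $N=\{1,\dots,n\}$, items $M=\{1,\dots,m\}$ with capacities $c\in\mathbb{N}^m$. Bundles are $x\in\mathcal{X}=\{0,\dots,c_1\}\times\cdots\times\{0,\dots,c_m\}$. Each bidder $i$ has a value function $v_i:\mathcal{X}\to\mathbb{R}_{\ge0}$. Feasible allocations: $\mathcal{F}=\{a\in\mathcal{X}^n:\sum_i a_{ij}\le c_j\ \forall j\}$. Social welfare $V(a)=\sum_i v_i(a_i)$; efficiency of $a$ is $V(a)/\max_{a'\in\mathcal{F}}V(a')$. A demand query at prices $p\in\mathbb{R}^m_{\ge0}$ is answered truthfully by bidder $i$ with some $x_i^*(p)\in\arg\max_{x\in\mathcal{X}}\{v_i(x)-\langle p,x\rangle\}$; a value query for $x$ is answered with $v_i(x)$. With reports $R_i$ consisting of demand responses $R_i^{DQ}$ (pairs $(x,p)$) and value responses $R_i^{VQ}$ (pairs $(x,v_i(x))$), the inferred value is $\tilde v_i(x;R_i)=v_i(x)$ if $x$ appears in $R_i^{VQ}$ and otherwise $\max(\{\langle x,p\rangle:(x,p)\in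 R_i^{DQ}\}\cup\{0\})$. The WDP allocation is $a^*(R)\in\arg\max_{a\in\mathcal{F}}\sum_i\tilde v_i(a_i;R_i)$. *)

(* Defs.v *)
From HB Require Import structures.
From mathcomp Require Import all_boot all_order all_algebra.
Set Implicit Arguments. Unset Strict Implicit. Unset Printing Implicit Defensive.
Import Order.TTheory GRing.Theory Num.Theory.
Local Open Scope ring_scope.

(* Bundles x in X = {0..c_1} x ... x {0..c_m}: item j has multiplicity x j <= c j. *)
Definition bundle (m : nat) (c : 'I_m -> nat) : finType :=
  {dffun forall j : 'I_m, 'I_(c j).+1}.

Definition alloc (n m : nat) (c : 'I_m -> nat) : finType :=
  {ffun 'I_n -> bundle c}.

Definition feasible n m (c : 'I_m -> nat) (a : alloc n c) : bool :=
  [forall j : 'I_m, (\sum_(i < n) (a i j : nat) <= c j)%N].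

Definition pdot (R : numDomainType) m (c : 'I_m -> nat)
  (p : {ffun 'I_m -> R}) (x : bundle c) : R :=
  \sum_(j < m) p j * (x j : nat)%:R.

Definition welfare (R : numDomainType) n m (c : 'I_m -> nat)
  (v : 'I_n -> bundle c -> R) (a : alloc n c) : R :=
  \sum_(i < n) v i (a i).

(* max_{a' in F} V(a') (values are nonnegative, so 0 is a neutral default). *)
Definition opt_welfare (R : realDomainType) n m (c : 'I_m -> nat)
  (v : 'I_n -> bundle c -> R) : R :=
  \big[Num.max/0]_(a : alloc n c | feasible a) welfare v a.

Definition efficiency (R : realFieldType) n m (c : 'I_m -> nat)
  (v : 'I_n -> bundle c -> R) (a : alloc n c) : R :=
  welfare v a / opt_welfare v.

Definition truthful_demand (R : numDomainType) m (c : 'I_m -> nat)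
  (vi : bundle c -> R) (p : {ffun 'I_m -> R}) (x : bundle c) : Prop :=
  forall y : bundle c, vi y - pdot p y <= vi x - pdot p x.

(* Inferred value tilde v_i(x; R_i): the demand responses R_i^DQ are the
   (bundle, price) pairs dqi, the value responses R_i^VQ are the bundles in
   vqi, answered truthfully with v_i(x). *)
Definition inferred_value (R : realDomainType) m (c : 'I_m -> nat)
  (vi : bundle c -> R) (dqi : seq (bundle c * {ffun 'I_m -> R}))
  (vqi : seq (bundle c)) (x : bundle c) : R :=
  if x \in vqi then vi x
  else \big[Num.max/0]_(q <- dqi | q.1 == x) pdot q.2 x.

Definition is_WDP (R : realDomainType) n m (c : 'I_m -> nat)
  (v : 'I_n -> bundle c -> R)
  (dq : 'I_n -> seq (bundle c * {ffun 'I_m -> R}))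
  (vq : 'I_n -> seq (bundle c)) (a : alloc n c) : Prop :=
  feasible a /\
  forall b : alloc n c, feasible b ->
    \sum_(i < n) inferred_value (v i) (dq i) (vq i) (b i)
    <= \sum_(i < n) inferred_value (v i) (dq i) (vq i) (a i).

(* Main.v *)
Require Import Defs.
From HB Require Import structures.
From mathcomp Require Import all_boot all_order all_algebra.
From mathcomp Require Import lra.
Import Order.TTheory GRing.Theory Num.Theory.
Local Open Scope ring_scope.

Lemma pdot_le (R : realFieldType) m (c : 'I_m -> nat) (vi : bundle c -> R)
  (hv : forall x, 0 <= vi x) p x :
  truthful_demand vi p x -> pdot p x <= vi x.
Proof.
move=> /(_ (@finfun _ (fun j => 'I_(c j).+1) (fun j => ord0))).
have -> : pdot p (@finfun _ (fun j => 'I_(c j).+1) (fun j => ord0)) = 0.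
  by rewrite /pdot big1 // => j _; rewrite ffunE /= mulr0.
rewrite subr0 => H.
have := hv (@finfun _ (fun j => 'I_(c j).+1) (fun j => ord0)).
move: H; set z := vi _ => H H0.
have : z <= vi x - pdot p x by [].
lra.
Qed.

Lemma infer_le (R : realFieldType) m (c : 'I_m -> nat) (vi : bundle c -> R)
  (hv : forall x, 0 <= vi x) dqi vqi
  (hdq : forall q, q \in dqi -> truthful_demand vi q.2 q.1) x :
  inferred_value vi dqi vqi x <= vi x.
Proof.
rewrite /inferred_value; case: ifP => // _.
rewrite big_seq_cond.
apply: (big_ind (fun y => y <= vi x)) => //.
  by move=> y z Hy Hz; rewrite ge_max Hy Hz.
move=> q /andP [Hq /eqP <-].
by apply: pdot_le => //; apply: hdq.
Qed.

Theorem lemmaD9 (R : realFieldType) (n m : nat) (c : 'I_m -> nat)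
  (v : 'I_n -> bundle c -> R)
  (hv : forall i x, 0 <= v i x)
  (dq : 'I_n -> seq (bundle c * {ffun 'I_m -> R}))
  (hdq : forall i q, q \in dq i ->
           (forall j, 0 <= q.2 j) /\ truthful_demand (v i) q.2 q.1)
  (aDQ : alloc n c)
  (haDQ : is_WDP v dq (fun _ => [::]) aDQ)
  (extra : 'I_n -> seq (bundle c))
  (a : alloc n c)
  (ha : is_WDP v dq (fun i => aDQ i :: extra i) a) :
  efficiency v aDQ <= efficiency v a.
Proof.
have Hw : welfare v aDQ <= welfare v a.
  case: haDQ => HfDQ _; case: ha => _ Hopt.
  have := Hopt aDQ HfDQ.
  have -> : \sum_(i < n) inferred_value (v i) (dq i) (aDQ i :: extra i) (aDQ i)
            = welfare v aDQ.
    by apply: eq_bigr => i _; rewrite /inferred_value mem_head.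
  move=> H; apply: (le_trans H); rewrite /welfare; apply: ler_sum => i _.
  apply: infer_le => // q Hq; exact: (hdq i q Hq).2.
have Hopt0 : 0 <= opt_welfare v.
  rewrite /opt_welfare; apply: (big_ind (fun y => 0 <= y)) => //.
  - by move=> y z Hy Hz; rewrite le_max Hy.
  - by move=> b _; rewrite /welfare sumr_ge0.
rewrite /efficiency; apply: ler_wpM2r => //; by rewrite invr_ge0.
Qed.
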